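(* Let $f_{AH}(x)=\frac{x+1}{2}-\frac{2x}{x+1}$ for $x\in(0,\infty)$, let $f_{AH}^*(u)=u\,f_{AH}\!\left(\frac{1-u}{u}\right)$ for $u\in(0,1)$, extended by continuity to $[0,1]$ (explicitly $f_{AH}^*(u)=\frac12(2u-1)^2$), and define $\overline M_{AH}(C_1,C_2)=E_X\{f_{AH}^*(P(C_2\mid x))\}$. Then $$P_e\le \frac12\left[1-2\,\overline M_{AH}(C_1,C_2)\right].$$
   Context: Two-class decision problem: classes $C_1,C_2$, an observation $x$ in a space $\mathrm X$ with density $p(x)$, and a posteriori probabilities $P(C_1\mid x),P(C_2\mid x)\ge0$ with $P(C_1\mid x)+P(C_2\mid x)=1$. $E_X\{g(x)\}=\int_{\mathrm X} g(x)p(x)\,dx$. $P_e=E_X\{\min(P(C_1\mid x),P(C_2\mid x))\}$ is the Bayesian probability of error. *)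

(* Defs.v *)
From mathcomp Require Import all_boot all_order all_algebra.
From mathcomp Require Import all_classical all_reals all_analysis.
Set Implicit Arguments. Unset Strict Implicit. Unset Printing Implicit Defensive.
Import Order.TTheory GRing.Theory Num.Theory.
Local Open Scope ring_scope.

Definition f_AH (R : realType) (x : R) : R := (x + 1) / 2 - (2 * x) / (x + 1).

(* f*_AH(u) = u f_AH((1-u)/u) on (0,1), extended by continuity to [0,1]
   (the continuous extension takes the value 1/2 at u = 0 and u = 1). *)
Definition f_AH_star (R : realType) (u : R) : R :=
  if (0 < u) && (u < 1) then u * f_AH ((1 - u) / u) else 1 / 2.

Definition EX d (T : measurableType d) (R : realType)
  (mu : {measure set T -> \bar R}) (p : T -> R) (g : T -> R) : \bar R :=
  (\int[mu]_x ((g x * p x)%:E))%E.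

Definition Pe d (T : measurableType d) (R : realType)
  (mu : {measure set T -> \bar R}) (p P1 P2 : T -> R) : \bar R :=
  EX mu p (fun x => Num.min (P1 x) (P2 x)).

Definition M_AH d (T : measurableType d) (R : realType)
  (mu : {measure set T -> \bar R}) (p P2 : T -> R) : \bar R :=
  EX mu p (fun x => f_AH_star (P2 x)).

(* Main.v *)
Require Import Defs.
From mathcomp Require Import all_boot all_order all_algebra.
From mathcomp Require Import all_classical all_reals all_analysis.
From mathcomp Require Import ring lra.
Import Order.TTheory GRing.Theory Num.Theory.
Local Open Scope ring_scope.

Lemma fstar_eq (R : realType) (u : R) : 0 <= u <= 1 ->
  f_AH_star u = (2 * u - 1) ^+ 2 / 2.
Proof.
move=> /andP[u0 u1]; rewrite /f_AH_star /f_AH.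
case: ifP => [/andP[u0' u1']|].
  have un : u != 0 by rewrite gt_eqF.
  have -> : (1 - u) / u + 1 = u^-1 by field.
  by field.
move/negbT; rewrite negb_and -!leNgt => /orP[h|h].
  have -> : u = 0 by lra.
  by field.
have -> : u = 1 by lra.
by field.
Qed.

Lemma pt_ineq (R : realType) (u : R) : 0 <= u <= 1 ->
  Num.min (1 - u) u + (2 * u - 1) ^+ 2 / 2 <= 1 / 2.
Proof.
move=> /andP[u0 u1]; rewrite /Num.min; case: ltP => h; nra.
Qed.

Theorem mainTheorem9 (d : measure_display) (T : measurableType d) (R : realType)
  (mu : {measure set T -> \bar R}) (p P1 P2 : T -> R)
  (p_meas : measurable_fun setT p) (p_ge0 : forall x, 0 <= p x)
  (p_density : (\int[mu]_x (p x)%:E = 1)%E)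
  (P1_meas : measurable_fun setT P1) (P2_meas : measurable_fun setT P2)
  (P1_ge0 : forall x, 0 <= P1 x) (P2_ge0 : forall x, 0 <= P2 x)
  (P12_sum : forall x, P1 x + P2 x = 1) :
  (Pe mu p P1 P2 <= (1 / 2)%:E * (1 - 2%:E * M_AH mu p P2))%E.
Proof.
have P2le1 x : P2 x <= 1 by rewrite -(P12_sum x) lerDr.
have P2b x : 0 <= P2 x <= 1 by rewrite P2_ge0 P2le1.
rewrite /Pe /M_AH /EX.
have -> : (\int[mu]_x ((f_AH_star (P2 x) * p x)%:E) =
    \int[mu]_x (((2 * P2 x - 1) ^+ 2 / 2 * p x)%:E))%E.
  by apply: eq_integral => x _; rewrite fstar_eq.
have Bp x : 0 <= (2 * P2 x - 1) ^+ 2 / 2 * p x.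
  by apply: mulr_ge0 => //; apply: divr_ge0 => //; exact: sqr_ge0.
have Ap x : 0 <= Num.min (P1 x) (P2 x) * p x.
  by apply: mulr_ge0 => //; rewrite /Num.min; case: ifP.
set A := (\int[mu]_x _)%E.
set B := (\int[mu]_x _)%E.
have mA : measurable_fun setT (fun x => (Num.min (P1 x) (P2 x) * p x)).
  apply: measurable_realfun.measurable_funM => //.
  exact: measurable_realfun.measurable_minr.
have mB : measurable_fun setT (fun x => ((2 * P2 x - 1) ^+ 2 / 2 * p x)).
  apply: measurable_realfun.measurable_funM => //.
  apply: (measurable_realfun.measurable_funM (f := fun x => (2 * P2 x - 1) ^+ 2)) => //.
  apply: measurable_realfun.measurable_funX.
  apply: (measurable_realfun.measurable_funD (f := fun x => 2 * P2 x)) => //.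
  exact: (measurable_realfun.measurable_funM (f := fun=> 2)).
have A0 : (0 <= A)%E.
  apply: integral_ge0 => x _; rewrite lee_fin mulr_ge0 //.
  by rewrite /Num.min; case: ifP.
have B0 : (0 <= B)%E.
  by apply: integral_ge0 => x _; rewrite lee_fin.
have AB : (A + B <= (1 / 2)%:E)%E.
  rewrite /A /B -ge0_integralD //; last 4 first.
  - by move=> x _; rewrite lee_fin.
  - by apply/measurable_realfun.measurable_EFinP.
  - by move=> x _; rewrite lee_fin.
  - by apply/measurable_realfun.measurable_EFinP.
  have -> : ((1 / 2)%:E = (1 / 2)%:E * \int[mu]_x (p x)%:E)%E
    by rewrite p_density mule1.
  rewrite -ge0_integralZl //; try (by move=> x _; rewrite lee_fin);
    try by apply/measurable_realfun.measurable_EFinP.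
  apply: ge0_le_integral => //.
  - by move=> x _; rewrite adde_ge0 // lee_fin.
  - by apply: emeasurable_funD; apply/measurable_realfun.measurable_EFinP.
  - apply: emeasurable_funM => //; by apply/measurable_realfun.measurable_EFinP.
  move=> x _; rewrite -EFinD -EFinM lee_fin -mulrDl ler_wpM2r //.
  have -> : P1 x = 1 - P2 x by rewrite -(P12_sum x) addrK.
  exact: pt_ineq.
move: A0 B0 AB; case: A => [a| |]; case: B => [b| |] //=.
- have -> : (1 + (- (2 * b))%:E = (1 - 2 * b)%:E)%E by [].
  move=> a0 b0 ab.
  have ab' : a + b <= 1/2 by rewrite -lee_fin EFinD.
  rewrite -EFinM lee_fin; lra.
Qed.
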